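(* Assume $f$ has a unique global maximizer, contains no weak epistasis, and every order-1 epistasis of $f$ is strict. Then the epistatic graph contains no chordless directed cycle of size greater than $2$.
   Context: Fix $\ell\ge1$, loci $V=\{0,\dots,\ell-1\}$, chromosomes $\vec y\in\{0,1\}^V$, fitness $f:\{0,1\}^V\to\mathbb R$ (maximized) with unique global maximizer $g$. An assignment $A$ is a set of pairs $(v,a)$ with at most one pair per locus; coverage $\mathcal C(A)$; $A[v]$ its allele at $v$. $\Psi_A$ is the set of chromosomes agreeing with $A$ on $\mathcal C(A)$ with maximum fitness among such chromosomes; $\Psi_A[v]=\{\psi_v:\psi\in\Psi_A\}$. Epistasis: for $v\in V$ and nonempty $S\subseteq V\setminus\{v\}$, $S\Rightarrow v$ iff for every $s\in S$ there exists an assignment $A$ with $\mathcal C(A)=S$ and $\Psi_A[v]\neq\Psi_{A\setminus\{(s,A[s])\}}[v]$. An epistasis $S\Rightarrow v$ with $|S|\ge2$ is weak if no nonempty proper subset $T\subsetneq S$ has $T\Rightarrow v$. An order-1 epistasis $\{u\}\Rightarrow v$ is strict, written $u\rightarrow v$, if $\Psi_{\{(u,1-g[u])\}}[v]=\{1-g[v]\}$. The epistatic graph (EG) is the directed graph on $V$ with edge $u\to v$ iff $\{u\}\Rightarrow v$ (under the assumption, iff $u\rightarrow v$). A directed cycle $v_0\rightarrow v_1\rightarrow\cdots\rightarrow v_{c-1}\rightarrow v_0$ of size $c$ (indices mod $c$) is chordless if there are no $i$ and $j\neq i+1 \pmod c$ with $v_i\rightarrow v_j$ (so e.g. in $a\to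 b\to c\to a$, an edge $b\to a$ counts as a chord). *)

(* Defs.v *)
From HB Require Import structures.
From mathcomp Require Import all_boot all_order all_algebra.
From mathcomp Require Import reals.
Set Implicit Arguments. Unset Strict Implicit. Unset Printing Implicit Defensive.
Import Order.TTheory GRing.Theory Num.Theory.
Local Open Scope ring_scope.

Section Epistasis.
Variables (R : realType) (l : nat).

(* loci V = 'I_l, chromosomes y : V -> {0,1} (false = 0, true = 1) *)
Definition chrom := {ffun 'I_l -> bool}.

(* an assignment: at most one allele per locus, i.e. a partial map V -> {0,1};
   A v = Some a  iff  (v,a) \in A *)
Definition assignment := {ffun 'I_l -> option bool}.

Definition coverage (A : assignment) : {set 'I_l} := [set v | A v != None].

Definition remove_locus (A : assignment) (s : 'I_l) : assignment :=
  [ffun v => if v == s then None else A v].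

Definition agrees (A : assignment) (y : chrom) : bool :=
  [forall v, if A v is Some a then y v == a else true].

Variable f : chrom -> R.

Definition Psi (A : assignment) : {set chrom} :=
  [set y | agrees A y & [forall z, agrees A z ==> (f z <= f y)]].

Definition PsiAt (A : assignment) (v : 'I_l) : {set bool} :=
  [set (y : chrom) v | y in Psi A].

Definition epistasis (S : {set 'I_l}) (v : 'I_l) : Prop :=
  [/\ v \notin S, S != set0 &
      forall s, s \in S -> exists A : assignment,
        coverage A = S /\ PsiAt A v != PsiAt (remove_locus A s) v].

Definition weak_epistasis (S : {set 'I_l}) (v : 'I_l) : Prop :=
  [/\ 2 <= #|S|, epistasis S v &
      forall T : {set 'I_l}, T != set0 -> T \proper S -> ~ epistasis T v]%N.

Definition unique_global_max (g : chrom) : Prop :=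
  (forall y, f y <= f g) /\ (forall y, (forall z, f z <= f y) -> y = g).

Definition single (u : 'I_l) (a : bool) : assignment :=
  [ffun v => if v == u then Some a else None].

Definition strict_epistasis (g : chrom) (u v : 'I_l) : Prop :=
  epistasis [set u] v /\ PsiAt (single u (~~ g u)) v = [set ~~ g v].

Definition EG_edge (u v : 'I_l) : Prop := epistasis [set u] v.

End Epistasis.

Definition chordless_cycle (T : Type) (E : T -> T -> Prop) (c : nat)
  (w : nat -> T) : Prop :=
  [/\ (forall i j, (i < c)%N -> (j < c)%N -> w i = w j -> i = j),
      (forall i, (i < c)%N -> E (w i) (w (i.+1 %% c)%N)) &
      (forall i j, (i < c)%N -> (j < c)%N -> j != (i.+1 %% c)%N ->
                   ~ E (w i) (w j))].

(* Main.v *)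
Require Import Defs.
From mathcomp Require Import all_boot all_order all_algebra.
From mathcomp Require Import reals.
Import Order.TTheory GRing.Theory Num.Theory.
Local Open Scope ring_scope.

Section Aux.
Variables (R : realType) (l : nat) (f : chrom l -> R).

Lemma Psi_nonempty (A : assignment l) (y0 : chrom l) :
  agrees A y0 -> exists y, y \in Psi f A.
Proof.
move=> Ay0.
case: (@arg_maxP _ R (chrom l) y0 (agrees A) f Ay0) => y Ay Hmax.
exists y; rewrite inE Ay /=; apply/forallP => z; apply/implyP => Az.
exact: Hmax.
Qed.

Lemma step (g : chrom l) (u v : 'I_l) y z :
  strict_epistasis f g u v ->
  y \in Psi f (single u (~~ g u)) -> z \in Psi f (single v (~~ g v)) ->
  agrees (single v (~~ g v)) y /\ f y <= f z.
Proof.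
case=> _ HP Hy Hz.
have : y v \in PsiAt f (single u (~~ g u)) v by apply/imsetP; exists y.
rewrite HP inE => /eqP yv.
have Ay : agrees (single v (~~ g v)) y.
  apply/forallP => x; rewrite ffunE; case: eqP => // ->; by rewrite yv.
split=> //.
move: Hz; rewrite inE => /andP [_ /forallP Hz].
exact: (implyP (Hz y) Ay).
Qed.

End Aux.
Arguments step {R l f g u v y z}.

Theorem lemma6 (R : realType) (l : nat) (Hl : (0 < l)%N)
  (f : chrom l -> R) (g : chrom l) :
  unique_global_max f g ->
  (forall (S : {set 'I_l}) (v : 'I_l), ~ weak_epistasis f S v) ->
  (forall u v : 'I_l, epistasis f [set u] v -> strict_epistasis f g u v) ->
  ~ exists (c : nat) (w : nat -> 'I_l),
      (2 < c)%N /\ chordless_cycle (EG_edge f) c w.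
Proof.
move=> [Hg1 Hg2] _ Hstr [c [w [Hc [Hinj Hedge Hno]]]].
pose ns u := single u (~~ g u).
have feas u : exists y, y \in Psi f (ns u).
  apply: (@Psi_nonempty R l f _ [ffun x => if x == u then ~~ g u else g x]).
  apply/forallP => x; rewrite !ffunE; case: eqP => // ->; by rewrite ffunE eqxx.
have [z Hz] : exists z : nat -> chrom l, forall i, z i \in Psi f (ns (w i)).
  exists (fun i => xchoose (feas (w i))) => i; exact: xchooseP.
have St i : (i < c)%N -> strict_epistasis f g (w i) (w (i.+1 %% c)%N).
  by move=> ic; apply: Hstr; apply: Hedge.
have chain i : (0 < i)%N -> (i < c)%N -> f (z 1%N) <= f (z i).
  elim: i => // -[|i] IH _ Hi //.
  have := IH isT (ltnW Hi).
  have := step (St i.+1 (ltnW Hi)) (Hz i.+1).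
  rewrite modn_small //.
  move=> /(_ (z i.+2) (Hz _)) [_ h1] h2; exact: le_trans h2 h1.
have c1 : ((c.-1).+1 = c)%N by rewrite prednK // (ltn_trans _ Hc).
have Hlast : f (z 1%N) <= f (z 0%N).
  have h : (0 < c.-1)%N by rewrite -ltnS c1 (ltn_trans _ Hc).
  have hc : (c.-1 < c)%N by rewrite -[X in (_ < X)%N]c1 ltnSn.
  apply: le_trans (chain _ h hc) _.
  have := step (St c.-1 hc) (Hz c.-1) (Hz _).
  by rewrite c1 modnn => -[_ ->].
have h0c : (0 < c)%N by apply: ltn_trans Hc.
have h1c : (1 < c)%N by apply: ltn_trans Hc.
have c1' : (1 %% c = 1)%N by rewrite modn_small // (ltn_trans _ Hc).
have [A01 _] := step (St 0%N h0c) (Hz 0%N) (Hz (0.+1 %% c)%N).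
rewrite c1' in A01.
have z0P : z 0%N \in Psi f (ns (w 1%N)).
  rewrite inE A01 /=; apply/forallP => y; apply/implyP => Ay.
  apply: le_trans Hlast.
  by move: (Hz 1%N); rewrite inE => /andP [_ /forallP H]; exact: (implyP (H y) Ay).
have St1 := St 1%N h1c.
rewrite modn_small // in St1.
have : z 0%N (w 2%N) \in PsiAt f (ns (w 1%N)) (w 2%N) by apply/imsetP; exists (z 0%N).
case: St1 => _ -> ; rewrite inE => /eqP z02.
apply: (Hno 0%N 2%N h0c Hc); first by rewrite c1'.
split.
- rewrite inE; apply/eqP => /(Hinj _ _ Hc h0c) //.
- by apply/set0Pn; exists (w 0%N); rewrite inE.
move=> s; rewrite inE => /eqP ->; exists (ns (w 0%N)); split.
  apply/setP => x; rewrite !inE /ns /single ffunE; by case: (x == w 0%N).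
apply/negP => /eqP E.
have : z 0%N (w 2%N) \in PsiAt f (ns (w 0%N)) (w 2%N) by apply/imsetP; exists (z 0%N).
rewrite E => /imsetP [y Hy Ey]; rewrite Ey in z02.
have yg : y = g.
  apply: Hg2 => x; move: Hy; rewrite inE => /andP [_ /forallP H]; apply: (implyP (H x)).
  apply/forallP => v; rewrite !ffunE; by case: eqP.
by move: z02; rewrite yg; case: (g _).
Qed.
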